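(* Let $b\in\{0,1\}^d$ and let $q$ be the simple gradient associated with $b$. Then $H_{\bar b}(q)=0$ (equivalently $N_{\bar b}(q)=1$) for every bitmap $\bar b\ge b$.
   Context: Jackson network with a tree topology on nodes $\{1,\dots,d\}$, root node $1$; $i\to j$ means node $j$ is a child of node $i$. Customers arrive from outside only at node $1$, with rate $\lambda>0$. For $i\to j$, $\mu_{i,j}>0$ is the rate at which node $i$ serves customers and sends them to node $j$; $\mu_{i,0}\ge 0$ is the rate at which node $i$ serves customers who then leave the system. Let $\mu_i=\sum_{k:i\to k}\mu_{i,k}+\mu_{i,0}>0$. Arrival rates: $\Lambda_1=\lambda$ and $\Lambda_j=\Lambda_i\mu_{i,j}/\mu_i$ if $i\to j$. Utilities $\rho_i=\Lambda_i/\mu_i$, assumed to satisfy $\max_i\rho_i<1$; also $\lambda+\sum_i\mu_i=1$. Let $\mu'_{i,0}=\Lambda_i\mu_{i,0}/\mu_i$. A bitmap $b\in\{0,1\}^d$ encodes which nodes are nonempty ($b(i)=1$) or empty ($b(i)=0$); $b'\ge b$ means $b'(i)\ge b(i)$ for all $i$. For a bitmap $b$ and $q\in\mathbb{R}^d$: $N_b(q)=\lambda e^{-q(1)/2}+\sum_{i:b(i)=1}\sum_{j:i\to j}\mu_{i,j}e^{(q(i)-q(j))/2}+\sum_{i:b(i)=1}\mu_{i,0}e^{q(i)/2}+\sum_{i:b(i)=0}\mu_i$, and $H_b(q)=-2\log N_b(q)$. Simple rates: $m_i(b)=\mu_i$ if $b(i)=1$, and $m_i(b)=\sum_{k:i\to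 k}m_k(b)+\mu'_{i,0}$ if $b(i)=0$ (recursively from the leaves). The simple gradient of $b$ is $q$ with $q(i)=2\log(\Lambda_i/m_i(b))$. *)

(* Defs.v *)
From Stdlib Require Import Reals List Arith Lia Lra.
Import ListNotations.
Open Scope R_scope.

Definition sumR (l : list nat) (f : nat -> R) : R :=
  fold_right Rplus 0 (map f l).

Definition nodes (d : nat) : list nat := seq 1 d.

(* The tree is given by a parent function [par] on nodes 2..d (node 1 is the
   root).  Edge i -> j  iff  2 <= j <= d and par j = i. *)
Definition children (d : nat) (par : nat -> nat) (i : nat) : list nat :=
  filter (fun k => Nat.eqb (par k) i) (seq 2 (d - 1)).

Definition is_edge (d : nat) (par : nat -> nat) (i j : nat) : Prop :=
  (2 <= j <= d)%nat /\ par j = i.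

Definition rooted_tree (d : nat) (par : nat -> nat) : Prop :=
  (1 <= d)%nat /\
  (forall j, (2 <= j <= d)%nat -> (1 <= par j <= d)%nat) /\
  (forall i, (1 <= i <= d)%nat -> exists n, Nat.iter n par i = 1%nat).

Definition mu_tot (d : nat) (par : nat -> nat) (mu : nat -> nat -> R)
  (mu0 : nat -> R) (i : nat) : R :=
  sumR (children d par i) (fun k => mu i k) + mu0 i.

(* Arrival rates Lambda, defined along the path from the root
   (fuel-based recursion; fuel d suffices since depth < d). *)
Fixpoint Lam_fuel (fuel : nat) (par : nat -> nat) (lam : R)
  (mu : nat -> nat -> R) (mut : nat -> R) (j : nat) : R :=
  if Nat.eqb j 1 then lam else
  match fuel with
  | O => 0
  | S f => Lam_fuel f par lam mu mut (par j) * mu (par j) j / mut (par j)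
  end.

Definition Lam (d : nat) (par : nat -> nat) (lam : R)
  (mu : nat -> nat -> R) (mu0 : nat -> R) (j : nat) : R :=
  Lam_fuel d par lam mu (mu_tot d par mu mu0) j.

Definition rho (d : nat) (par : nat -> nat) (lam : R)
  (mu : nat -> nat -> R) (mu0 : nat -> R) (i : nat) : R :=
  Lam d par lam mu mu0 i / mu_tot d par mu mu0 i.

Definition mu0' (d : nat) (par : nat -> nat) (lam : R)
  (mu : nat -> nat -> R) (mu0 : nat -> R) (i : nat) : R :=
  Lam d par lam mu mu0 i * mu0 i / mu_tot d par mu mu0 i.

(* Bitmaps: b i = true means node i nonempty. *)
Definition bitmap := nat -> bool.

Definition bitmap_ge (d : nat) (b' b : bitmap) : Prop :=
  forall i, (1 <= i <= d)%nat -> b i = true -> b' i = true.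

(* Simple rates m_i(b), recursively from the leaves (fuel d suffices). *)
Fixpoint m_fuel (fuel : nat) (d : nat) (par : nat -> nat)
  (mut : nat -> R) (mu0p : nat -> R) (b : bitmap) (i : nat) : R :=
  if b i then mut i else
  match fuel with
  | O => mu0p i
  | S f => sumR (children d par i) (fun k => m_fuel f d par mut mu0p b k) + mu0p i
  end.

Definition m_rate (d : nat) (par : nat -> nat) (lam : R)
  (mu : nat -> nat -> R) (mu0 : nat -> R) (b : bitmap) (i : nat) : R :=
  m_fuel d d par (mu_tot d par mu mu0) (mu0' d par lam mu mu0) b i.

Definition simple_gradient (d : nat) (par : nat -> nat) (lam : R)
  (mu : nat -> nat -> R) (mu0 : nat -> R) (b : bitmap) : nat -> R :=
  fun i => 2 * ln (Lam d par lam mu mu0 i / m_rate d par lam mu mu0 b i).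

Definition N_b (d : nat) (par : nat -> nat) (lam : R)
  (mu : nat -> nat -> R) (mu0 : nat -> R) (b : bitmap) (q : nat -> R) : R :=
  lam * exp (- q 1%nat / 2)
  + sumR (nodes d) (fun i => if b i then
        sumR (children d par i) (fun j => mu i j * exp ((q i - q j) / 2))
      else 0)
  + sumR (nodes d) (fun i => if b i then mu0 i * exp (q i / 2) else 0)
  + sumR (nodes d) (fun i => if b i then 0 else mu_tot d par mu mu0 i).

Definition H_b (d : nat) (par : nat -> nat) (lam : R)
  (mu : nat -> nat -> R) (mu0 : nat -> R) (b : bitmap) (q : nat -> R) : R :=
  -2 * ln (N_b d par lam mu mu0 b q).

(* Main.v *)
Require Import Defs.
From Stdlib Require Import Reals List Arith Lia Lra Classical.
Import ListNotations.
Open Scope R_scope.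

Lemma sumR_nil f : sumR [] f = 0. Proof. reflexivity. Qed.
Lemma sumR_cons x l f : sumR (x :: l) f = f x + sumR l f. Proof. reflexivity. Qed.

Lemma sumR_ext l f g : (forall x, In x l -> f x = g x) -> sumR l f = sumR l g.
Proof.
  induction l as [|a l IH]; intros H; [reflexivity|].
  rewrite !sumR_cons, H, IH; auto; [intros; apply H; simpl; auto| simpl; auto].
Qed.

Lemma sumR_plus l f g : sumR l (fun x => f x + g x) = sumR l f + sumR l g.
Proof. induction l; simpl; unfold sumR in *; simpl; [lra|]. rewrite IHl. lra. Qed.

Lemma sumR_minus l f g : sumR l (fun x => f x - g x) = sumR l f - sumR l g.
Proof. induction l; simpl; unfold sumR in *; simpl; [lra|]. rewrite IHl. lra. Qed.

Lemma sumR_scal l c f : sumR l (fun x => c * f x) = c * sumR l f.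
Proof. induction l; simpl; unfold sumR in *; simpl; [lra|]. rewrite IHl. lra. Qed.

Lemma sumR_nonneg l f : (forall x, In x l -> 0 <= f x) -> 0 <= sumR l f.
Proof.
  induction l as [|a l IH]; intros H; rewrite ?sumR_nil, ?sumR_cons; [lra|].
  assert (0 <= f a) by (apply H; simpl; auto).
  assert (0 <= sumR l f) by (apply IH; intros; apply H; simpl; auto). lra.
Qed.

Lemma sumR_pos l f : l <> [] -> (forall x, In x l -> 0 < f x) -> 0 < sumR l f.
Proof.
  destruct l as [|a l]; intros Hn H; [congruence|]. rewrite sumR_cons.
  assert (0 < f a) by (apply H; simpl; auto).
  assert (0 <= sumR l f) by (apply sumR_nonneg; intros; left; apply H; simpl; auto). lra.
Qed.

Lemma sumR_zero l : sumR l (fun _ => 0) = 0.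
Proof. induction l; [reflexivity|]. rewrite sumR_cons, IHl. lra. Qed.

Lemma sumR_indic I x c : NoDup I -> In x I ->
  sumR I (fun i => if Nat.eqb x i then c else 0) = c.
Proof.
  induction I as [|a I IH]; intros Hnd Hin; [destruct Hin|].
  inversion Hnd; subst. rewrite sumR_cons.
  destruct (Nat.eqb_spec x a).
  - subst. rewrite (sumR_ext _ _ (fun _ => 0)).
    + rewrite sumR_zero. lra.
    + intros y Hy. destruct (Nat.eqb_spec a y); subst; tauto.
  - destruct Hin; [congruence|]. rewrite IH; auto. lra.
Qed.

Lemma double_count (par : nat -> nat) I L F :
  NoDup I -> (forall k, In k L -> In (par k) I) ->
  sumR I (fun i => sumR (filter (fun k => Nat.eqb (par k) i) L) F) = sumR L F.
Proof.
  intros HI. induction L as [|k L IH]; intros HL.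
  - simpl. apply sumR_zero.
  - rewrite sumR_cons. simpl.
    rewrite (sumR_ext _ _ (fun i => (if Nat.eqb (par k) i then F k else 0) +
        sumR (filter (fun k => Nat.eqb (par k) i) L) F)).
    + rewrite sumR_plus, sumR_indic, IH; auto. intros; apply HL; simpl; auto.
      apply HL; simpl; auto.
    + intros i _. destruct (Nat.eqb (par k) i); rewrite ?sumR_cons; lra.
Qed.

Definition Dp (par : nat -> nat) (i n : nat) : Prop :=
  Nat.iter n par i = 1%nat /\ forall m, (m < n)%nat -> Nat.iter m par i <> 1%nat.

Lemma Dp_par par j n : Dp par j (S n) -> Dp par (par j) n /\ j <> 1%nat.
Proof.
  intros [H1 H2]. split; [split|].
  - rewrite <- Nat.iter_succ_r. auto.
  - intros m Hm. rewrite <- Nat.iter_succ_r. apply H2. lia.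
  - apply (H2 0%nat). lia.
Qed.

Lemma Dp_child par i j n : Dp par i n -> par j = i -> j <> 1%nat -> Dp par j (S n).
Proof.
  intros [H1 H2] Hp Hj. split.
  - rewrite Nat.iter_succ_r, Hp. auto.
  - intros [|m] Hm; [simpl; auto|].
    rewrite Nat.iter_succ_r, Hp. apply H2. lia.
Qed.

Lemma Dp_exists par i n : Nat.iter n par i = 1%nat -> exists k, Dp par i k.
Proof.
  induction n as [n IH] using lt_wf_ind. intros H.
  destruct (classic (exists m, (m < n)%nat /\ Nat.iter m par i = 1%nat)) as [[m [Hm Hm']]|Hno].
  - exact (IH m Hm Hm').
  - exists n. split; auto. intros m Hm Hm'. apply Hno. eauto.
Qed.

Lemma Dp_uniq par i n k : Dp par i n -> Dp par i k -> n = k.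
Proof.
  intros [A1 A2] [B1 B2]. destruct (Nat.lt_trichotomy n k) as [h|[h|h]]; auto.
  - exfalso. apply (B2 n); auto.
  - exfalso. apply (A2 k); auto.
Qed.

Lemma Dp_bound d par i n : rooted_tree d par -> (1 <= i <= d)%nat -> Dp par i n -> (n < d)%nat.
Proof.
  intros [_ [Hp _]] Hi [H1 H2].
  set (g := fun m => Nat.iter m par i).
  assert (Hr : forall m, (m <= n)%nat -> (1 <= g m <= d)%nat).
  { induction m; intros Hm; unfold g in *; simpl; auto.
    assert (Nat.iter m par i <> 1%nat) by (apply H2; lia).
    apply Hp. specialize (IHm ltac:(lia)). lia. }
  assert (Hsh : forall a b t, g a = g b -> g (t + a)%nat = g (t + b)%nat).
  { intros a b t E. unfold g in *. rewrite !Nat.iter_add. congruence. }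
  assert (Hinj : forall a b, (a <= n)%nat -> (b <= n)%nat -> g a = g b -> a = b).
  { intros a b Ha Hb E.
    destruct (Nat.lt_trichotomy a b) as [h|[h|h]]; auto; exfalso.
    - specialize (Hsh a b (n - b)%nat E).
      replace (n - b + b)%nat with n in Hsh by lia.
      apply (H2 (n - b + a)%nat); [lia|]. unfold g in Hsh. rewrite Hsh. auto.
    - specialize (Hsh b a (n - a)%nat (eq_sym E)).
      replace (n - a + a)%nat with n in Hsh by lia.
      apply (H2 (n - a + b)%nat); [lia|]. unfold g in Hsh. rewrite Hsh. auto. }
  assert (HN : NoDup (map g (seq 0 (S n)))).
  { apply NoDup_map_NoDup_ForallPairs; [|apply seq_NoDup].
    intros a b Ha Hb E. apply in_seq in Ha. apply in_seq in Hb. apply Hinj; auto; lia. }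
  assert (Hinc : incl (map g (seq 0 (S n))) (seq 1 d)).
  { intros x Hx. apply in_map_iff in Hx. destruct Hx as [m [<- Hm]].
    apply in_seq in Hm. apply in_seq. specialize (Hr m ltac:(lia)). lia. }
  pose proof (NoDup_incl_length HN Hinc) as HL.
  rewrite length_map, !length_seq in HL. lia.
Qed.

Lemma Lam_stab par lam mu mut j n f : Dp par j n -> (n <= f)%nat ->
  Lam_fuel f par lam mu mut j = Lam_fuel n par lam mu mut j.
Proof.
  revert j f. induction n as [|n IH]; intros j f HD Hf.
  - destruct HD as [H1 _]. simpl in H1. subst. destruct f; reflexivity.
  - destruct (Dp_par _ _ _ HD) as [HD' Hj]. destruct f as [|f]; [lia|].
    cbn [Lam_fuel]. destruct (Nat.eqb_spec j 1); [congruence|].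
    rewrite (IH (par j) f HD'); auto. lia.
Qed.

Lemma Lam_pos d par lam mu mu0 j n :
  rooted_tree d par -> 0 < lam ->
  (forall i j, is_edge d par i j -> 0 < mu i j) ->
  (forall i, (1 <= i <= d)%nat -> 0 < mu_tot d par mu mu0 i) ->
  (1 <= j <= d)%nat -> Dp par j n ->
  0 < Lam_fuel n par lam mu (mu_tot d par mu mu0) j.
Proof.
  intros Ht Hl Hmu Hmut. pose proof Ht as [_ [Hp _]]. revert j.
  induction n as [|n IH]; intros j Hj HD.
  - destruct HD as [H1 _]. simpl in H1. subst. simpl. auto.
  - destruct (Dp_par _ _ _ HD) as [HD' Hj1].
    cbn [Lam_fuel]. destruct (Nat.eqb_spec j 1); [congruence|].
    assert (Hpj : (1 <= par j <= d)%nat) by (apply Hp; lia).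
    apply Rmult_lt_0_compat; [apply Rmult_lt_0_compat|].
    + apply IH; auto.
    + apply Hmu. split; [lia|auto].
    + apply Rinv_0_lt_compat. apply Hmut; auto.
Qed.

Lemma in_children d par i j : In j (children d par i) -> (2 <= j <= d)%nat /\ par j = i.
Proof.
  unfold children. intros H. apply filter_In in H. destruct H as [H1 H2].
  apply in_seq in H1. apply Nat.eqb_eq in H2. split; [lia|auto].
Qed.

Lemma m_stab d par mut mu0p b : rooted_tree d par ->
  forall k i n, (1 <= i <= d)%nat -> Dp par i n -> (d <= n + k)%nat ->
  forall f g, (k <= f)%nat -> (k <= g)%nat ->
  m_fuel f d par mut mu0p b i = m_fuel g d par mut mu0p b i.
Proof.
  intros Ht k. induction k as [|k IH]; intros i n Hi HD Hk f g Hf Hg.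
  - pose proof (Dp_bound _ _ _ _ Ht Hi HD). lia.
  - destruct f as [|f]; [lia|]. destruct g as [|g]; [lia|].
    cbn [m_fuel]. destruct (b i); auto. f_equal. apply sumR_ext.
    intros j Hj. apply in_children in Hj. destruct Hj as [Hj Hpj].
    apply (IH j (S n)); try lia. apply (Dp_child _ i); auto. lia.
Qed.

Lemma m_pos d par mut mu0p b : rooted_tree d par ->
  (forall i, (1 <= i <= d)%nat -> 0 < mut i) ->
  (forall i, (1 <= i <= d)%nat -> 0 <= mu0p i) ->
  (forall i, (1 <= i <= d)%nat -> children d par i = [] -> 0 < mu0p i) ->
  forall k i n, (1 <= i <= d)%nat -> Dp par i n -> (d <= n + k)%nat ->
  forall f, (k <= f)%nat -> 0 < m_fuel f d par mut mu0p b i.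
Proof.
  intros Ht Hmut H0 Hleaf k. induction k as [|k IH]; intros i n Hi HD Hk f Hf.
  - pose proof (Dp_bound _ _ _ _ Ht Hi HD). lia.
  - destruct f as [|f]; [lia|].
    cbn [m_fuel]. destruct (b i); auto.
    destruct (children d par i) as [|c cs] eqn:E.
    + rewrite sumR_nil. specialize (Hleaf i Hi E). lra.
    + assert (0 < sumR (c :: cs) (fun k0 => m_fuel f d par mut mu0p b k0)).
      { apply sumR_pos; [congruence|]. intros j Hj. rewrite <- E in Hj.
        apply in_children in Hj. destruct Hj as [Hj Hpj].
        apply (IH j (S n)); try lia. apply (Dp_child _ i); auto. lia. }
      specialize (H0 i Hi). lra.
Qed.

Lemma seq1 d : (1 <= d)%nat -> seq 1 d = 1%nat :: seq 2 (d - 1).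
Proof. intros. destruct d; [lia|]. simpl. rewrite Nat.sub_0_r. reflexivity. Qed.

Theorem mainTheorem2 (d : nat) (par : nat -> nat) (lam : R)
  (mu : nat -> nat -> R) (mu0 : nat -> R)
  (Htree : rooted_tree d par)
  (Hlam : 0 < lam)
  (Hmu : forall i j, is_edge d par i j -> 0 < mu i j)
  (Hmu0 : forall i, (1 <= i <= d)%nat -> 0 <= mu0 i)
  (Hmut : forall i, (1 <= i <= d)%nat -> 0 < mu_tot d par mu mu0 i)
  (Hrho : forall i, (1 <= i <= d)%nat -> rho d par lam mu mu0 i < 1)
  (Hnorm : lam + sumR (nodes d) (mu_tot d par mu mu0) = 1)
  (b bbar : bitmap)
  (Hge : bitmap_ge d bbar b) :
  H_b d par lam mu mu0 bbar (simple_gradient d par lam mu mu0 b) = 0.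
Proof.
  pose proof Htree as [Hd [Hp Hroot]].
  assert (HD : forall i, (1 <= i <= d)%nat -> exists n, Dp par i n).
  { intros i Hi. destruct (Hroot i Hi) as [n Hn]. eapply Dp_exists; eauto. }
  set (L := Lam d par lam mu mu0).
  set (M := m_rate d par lam mu mu0 b).
  set (mt := mu_tot d par mu mu0).
  set (mp := mu0' d par lam mu mu0).
  set (ch := children d par).
  set (q := simple_gradient d par lam mu mu0 b).
  assert (HL1 : L 1%nat = lam).
  { unfold L, Lam. destruct d; reflexivity. }
  assert (HLn : forall i n, (1 <= i <= d)%nat -> Dp par i n ->
            L i = Lam_fuel n par lam mu mt i).
  { intros i n Hi Hn. unfold L, Lam. apply Lam_stab; auto.
    pose proof (Dp_bound _ _ _ _ Htree Hi Hn). lia. }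
  assert (HLpos : forall i, (1 <= i <= d)%nat -> 0 < L i).
  { intros i Hi. destruct (HD i Hi) as [n Hn]. rewrite (HLn i n Hi Hn).
    eapply Lam_pos; eauto. }
  assert (HLch : forall j, (2 <= j <= d)%nat -> L j = L (par j) * mu (par j) j / mt (par j)).
  { intros j Hj. assert (Hpj : (1 <= par j <= d)%nat) by (apply Hp; lia).
    destruct (HD _ Hpj) as [n Hn].
    assert (Hn' : Dp par j (S n)) by (apply (Dp_child _ (par j)); auto; lia).
    rewrite (HLn j (S n)), (HLn (par j) n); auto; [|lia].
    cbn [Lam_fuel]. destruct (Nat.eqb_spec j 1); [lia|]. reflexivity. }
  assert (Hmp0 : forall i, (1 <= i <= d)%nat -> 0 <= mp i).
  { intros i Hi. unfold mp, mu0'. fold L mt.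
    specialize (HLpos i Hi). specialize (Hmu0 i Hi). specialize (Hmut i Hi). fold mt in Hmut.
    unfold Rdiv. apply Rmult_le_pos; [apply Rmult_le_pos; lra|]. left; apply Rinv_0_lt_compat; lra. }
  assert (Hleaf : forall i, (1 <= i <= d)%nat -> children d par i = [] -> 0 < mp i).
  { intros i Hi E. unfold mp, mu0'. fold L mt.
    specialize (HLpos i Hi). specialize (Hmut i Hi). fold mt in Hmut.
    assert (Hm : mt i = mu0 i) by (unfold mt, mu_tot; rewrite E, sumR_nil; lra).
    unfold Rdiv. apply Rmult_lt_0_compat; [apply Rmult_lt_0_compat; lra|]. apply Rinv_0_lt_compat; lra. }
  assert (HMpos : forall i, (1 <= i <= d)%nat -> 0 < M i).
  { intros i Hi. destruct (HD i Hi) as [n Hn]. unfold M, m_rate.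
    apply (m_pos d par _ _ b Htree Hmut Hmp0 Hleaf d i n); auto; lia. }
  assert (HMb : forall i, b i = true -> M i = mt i).
  { intros i Hb. unfold M, m_rate. destruct d; [lia|]. cbn [m_fuel]. rewrite Hb. reflexivity. }
  assert (HMrec : forall i, (1 <= i <= d)%nat -> b i = false -> M i = sumR (ch i) M + mp i).
  { intros i Hi Hb. unfold M, m_rate. destruct d as [|d']; [lia|]. cbn [m_fuel]. rewrite Hb.
    f_equal. apply sumR_ext. intros j Hj. unfold ch in Hj. apply in_children in Hj.
    destruct Hj as [Hj Hpj]. destruct (HD j ltac:(lia)) as [n Hn].
    assert (n <> 0%nat). { intros ->. destruct Hn as [Hn _]. simpl in Hn. lia. }
    etransitivity; [apply (m_stab (S d') par _ _ b Htree d' j n) with (g := S d'); auto; lia|].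
    reflexivity. }
  assert (Hexp : forall i, (1 <= i <= d)%nat -> exp (q i / 2) = L i / M i).
  { intros i Hi. unfold q, simple_gradient. fold L M.
    replace (2 * ln (L i / M i) / 2) with (ln (L i / M i)) by field.
    apply exp_ln. specialize (HLpos i Hi). specialize (HMpos i Hi).
    unfold Rdiv. apply Rmult_lt_0_compat; [lra|]. apply Rinv_0_lt_compat; lra. }
  assert (Hnodes : forall F, sumR (nodes d) F = F 1%nat + sumR (seq 2 (d - 1)) F).
  { intros F. unfold nodes. rewrite seq1; auto. }
  assert (Hdc : forall F, sumR (nodes d) (fun i => sumR (ch i) F) = sumR (seq 2 (d - 1)) F).
  { intros F. apply double_count; [apply seq_NoDup|].
    intros k Hk. apply in_seq in Hk. apply in_seq. specialize (Hp k ltac:(lia)). lia. }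
  assert (Hflow : sumR (nodes d) mp = lam).
  { rewrite (sumR_ext _ _ (fun i => L i - sumR (ch i) L)).
    - rewrite sumR_minus, Hdc, Hnodes, HL1. lra.
    - intros i Hi. unfold nodes in Hi. apply in_seq in Hi.
      rewrite (sumR_ext _ _ (fun j => L i / mt i * mu i j)).
      + rewrite sumR_scal. unfold mp, mu0'. fold L mt.
        assert (Hmt : mt i = sumR (ch i) (fun k => mu i k) + mu0 i) by reflexivity.
        specialize (Hmut i ltac:(lia)). fold mt in Hmut.
        change (mt i = sumR (ch i) (mu i) + mu0 i) in Hmt.
        assert (Hs : sumR (ch i) (mu i) = mt i - mu0 i) by lra.
        rewrite Hs. field. lra.
      + intros j Hj. unfold ch in Hj. apply in_children in Hj. destruct Hj as [Hj Hpj].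
        rewrite HLch; auto. rewrite Hpj. specialize (Hmut i ltac:(lia)). fold mt in Hmut.
        field. lra. }
  assert (HT : forall i, In i (nodes d) ->
     (if bbar i then sumR (children d par i) (fun j => mu i j * exp ((q i - q j) / 2)) else 0)
     + (if bbar i then mu0 i * exp (q i / 2) else 0)
     + (if bbar i then 0 else mu_tot d par mu mu0 i)
     = mt i + (sumR (ch i) M + mp i - M i)).
  { intros i Hi. unfold nodes in Hi. apply in_seq in Hi.
    assert (Hi' : (1 <= i <= d)%nat) by lia.
    fold mt ch. destruct (bbar i) eqn:Eb.
    - rewrite (sumR_ext _ _ (fun j => mt i / M i * M j)).
      2: { intros j Hj. unfold ch in Hj. apply in_children in Hj. destruct Hj as [Hj Hpj].
        replace ((q i - q j) / 2) with (q i / 2 + - (q j / 2)) by field.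
        rewrite exp_plus, exp_Ropp, !Hexp; auto; try lia.
        rewrite (HLch j); auto. rewrite Hpj.
        assert (0 < mu i j) by (apply Hmu; split; auto).
        pose proof (HLpos i Hi'). pose proof (HMpos i Hi'). pose proof (HMpos j ltac:(lia)).
        specialize (Hmut i Hi'). fold mt in Hmut. field. repeat split; lra. }
      rewrite sumR_scal, Hexp; auto.
      unfold mp, mu0'. fold L mt.
      specialize (HLpos i Hi'). specialize (HMpos i Hi').
      specialize (Hmut i Hi'). fold mt in Hmut.
      destruct (b i) eqn:Ebi.
      + rewrite (HMb i Ebi) in *. field. lra.
      + pose proof (HMrec i Hi' Ebi) as Hr. unfold mp, mu0' in Hr. fold L mt in Hr.
        assert (Hs : sumR (ch i) M = M i - L i * mu0 i / mt i) by lra.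
        rewrite Hs. field. lra.
    - assert (Ebi : b i = false).
      { destruct (b i) eqn:E; auto. rewrite (Hge i Hi' E) in Eb. discriminate. }
      pose proof (HMrec i Hi' Ebi). lra. }
  unfold H_b.
  enough (HN : N_b d par lam mu mu0 bbar q = 1).
  { fold q. rewrite HN, ln_1. ring. }
  unfold N_b.
  set (SA := sumR (nodes d) (fun i => if bbar i then
        sumR (children d par i) (fun j => mu i j * exp ((q i - q j) / 2)) else 0)).
  set (SB := sumR (nodes d) (fun i => if bbar i then mu0 i * exp (q i / 2) else 0)).
  set (SC := sumR (nodes d) (fun i => if bbar i then 0 else mu_tot d par mu mu0 i)).
  assert (Hsum : SA + SB + SC = sumR (nodes d) (fun i => mt i + (sumR (ch i) M + mp i - M i))).
  { unfold SA, SB, SC. rewrite <- !sumR_plus. apply sumR_ext. exact HT. }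
  rewrite !Rplus_assoc, <- (Rplus_assoc SA), Hsum.

  rewrite sumR_plus, sumR_minus, sumR_plus.
  rewrite Hdc, Hflow.
  rewrite (Hnodes M).
  replace (- q 1%nat / 2) with (- (q 1%nat / 2)) by field.
  rewrite exp_Ropp, Hexp by lia. rewrite HL1.
  assert (0 < M 1%nat) by (apply HMpos; lia).
  fold mt in Hnorm.
  replace (lam * / (lam / M 1%nat)) with (M 1%nat) by (field; lra).
  lra.
Qed.
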